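(* Let $P$ be a finite poset with unique minimal element $x_0$ and $Q$ a non-empty poset ideal of $P$. Then for any field $k$, $\tilde H^i(\Delta((P\uplus Q)\setminus\{x_0^\ast\});k)=0$ for all $i\in\mathbb{Z}$.
   Context: $\Delta(\cdot)$ denotes the order complex (simplicial complex of chains) and $\tilde H^i$ reduced simplicial cohomology. A poset ideal $Q$ of $P$ is a subset with $x\in Q$, $y<x$ implying $y\in Q$. The poset $P\uplus Q$ has underlying set $P\cup Q^\ast$, $Q^\ast=\{x^\ast:x\in Q\}$ a disjoint copy of $Q$, with $\alpha<\beta$ iff either $\alpha,\beta\in P$ and $\alpha<\beta$ in $P$; or $\alpha=x^\ast,\beta=y^\ast$ with $x<y$ in $P$; or $\alpha=x^\ast$ with $x\in Q$, $\beta\in P$ and $x\le\beta$ in $P$. *)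

(* Defs.v *)
From HB Require Import structures.
From mathcomp Require Import all_boot all_order all_algebra.
Set Implicit Arguments. Unset Strict Implicit. Unset Printing Implicit Defensive.
Import Order.TTheory GRing.Theory Num.Theory.

(* A (finite abstract) simplicial complex on a finite vertex type [V] is given
   by its predicate of faces [F : pred {set V}]; the empty face is included,
   so the cochain complex below is the augmented one (reduced cohomology).
   An i-face is a face with i+1 vertices (i : int, the empty face has
   dimension -1).  Orientations are induced by the total order [enum_rank]
   of [V]. *)
Section ReducedCohomology.
Variables (V : finType) (k : fieldType).
Local Open Scope ring_scope.

Definition vpos (v : V) (t : {set V}) : nat :=
  #|[set w in t | (enum_rank w < enum_rank v)%N]|.

Definition coboundary (c : {set V} -> k) (t : {set V}) : k :=
  \sum_(v in t) (-1) ^+ (vpos v t) * c (t :\ v).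

Definition cochain_of (F : pred {set V}) (i : int) (c : {set V} -> k) : Prop :=
  forall s, c s != 0 -> F s /\ (#|s|%:Z = i + 1).

Definition reduced_cohomology_vanishes (F : pred {set V}) (i : int) : Prop :=
  forall c, cochain_of F i c ->
    (forall t, F t -> #|t|%:Z = i + 2 -> coboundary c t = 0) ->
    exists2 b, cochain_of F (i - 1) b &
      forall s, F s -> #|s|%:Z = i + 1 -> coboundary b s = c s.
End ReducedCohomology.

Definition order_complex (V : finType) (W : {set V}) (lt : rel V) : pred {set V} :=
  fun s => (s \subset W) &&
    [forall u in s, forall v in s, (u != v) ==> (lt u v || lt v u)].

(* Underlying set P ∪ Q^*, encoded in P + P: [inl x] is x ∈ P, [inr x] is x^*
   (only for x ∈ Q). *)
Section Uplus.
Variables (d : Order.disp_t) (P : finPOrderType d) (Q : {set P}).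
Local Open Scope order_scope.

Definition uplus_lt (a b : P + P) : bool :=
  match a, b with
  | inl x, inl y => x < y
  | inr x, inr y => x < y
  | inr x, inl y => x <= y
  | inl _, inr _ => false
  end.

Definition uplus_carrier : {set P + P} :=
  [set a | match a with inl _ => true | inr x => x \in Q end].

Definition minimal_elt (x : P) : Prop := forall y : P, ~ (y < x).
Definition poset_ideal (Q' : {set P}) : Prop :=
  forall x y : P, x \in Q' -> y < x -> y \in Q'.
End Uplus.

(* Main.v *)
Require Import Defs.
From HB Require Import structures.
From mathcomp Require Import all_boot all_order all_algebra.
From mathcomp Require Import zify.
Set Implicit Arguments. Unset Strict Implicit. Unset Printing Implicit Defensive.
Import Order.TTheory GRing.Theory Num.Theory.

Section Gen.
Variables (V : finType) (k : fieldType).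
Local Open Scope ring_scope.

Lemma vposU1 (u w : V) (t : {set V}) : u \notin t ->
  vpos w (u |: t) = (vpos w t + (enum_rank u < enum_rank w))%N.
Proof.
move=> ut; rewrite /vpos.
have -> : [set x in u |: t | (enum_rank x < enum_rank w)%N] =
  (if (enum_rank u < enum_rank w)%N then [set u] else set0) :|:
   [set x in t | (enum_rank x < enum_rank w)%N].
  apply/setP=> x; rewrite !inE; case: (eqVneq x u) => [->|xu] /=.
    by case: ifP; rewrite ?inE ?eqxx ?(negbTE ut) //= andbF.
  by case: ifP; rewrite ?inE ?(negbTE xu).
case: ifP => h; last by rewrite set0U addn0.
rewrite cardsU1 !inE (negbTE ut) add1n addn1.
by [].
Qed.

Lemma vposD1 (u w : V) (t : {set V}) : u \in t ->
  vpos w t = (vpos w (t :\ u) + (enum_rank u < enum_rank w))%N.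
Proof.
move=> ut; rewrite -{1}(setD1K ut) vposU1 //; by rewrite !inE eqxx.
Qed.

Lemma coboundaryD (c1 c2 : {set V} -> k) t :
  coboundary (fun s => c1 s + c2 s) t = coboundary c1 t + coboundary c2 t.
Proof. by rewrite /coboundary -big_split /=; apply: eq_bigr => v _; rewrite mulrDr. Qed.

Lemma coboundary0 t : coboundary (fun _ : {set V} => (0 : k)) t = 0.
Proof. by rewrite /coboundary big1 // => v _; rewrite mulr0. Qed.

Lemma pred_swap (t : {set V}) (a b : V) :
  (b \in t) && (a \in t :\ b) && ~~ (enum_rank b < enum_rank a)%N =
  (a \in t) && (b \in t :\ a) && (enum_rank a < enum_rank b)%N.
Proof.
rewrite !inE.
case: (eqVneq a b) => [->|ab]; first by rewrite ltnn !andbF.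
have : enum_rank a != enum_rank b by apply: contra ab => /eqP/enum_rank_inj ->.
by rewrite neq_ltn => /orP[h|h]; case: (a \in t); case: (b \in t);
  rewrite /= ?h ?(leq_gtF (ltnW h)).
Qed.

Lemma coboundary2 (c : {set V} -> k) t : coboundary (coboundary c) t = 0.
Proof.
rewrite /coboundary.
under eq_bigr do rewrite big_distrr /=.
rewrite pair_big_dep /=.
rewrite (bigID (fun p : V * V => (enum_rank p.1 < enum_rank p.2)%N)) /=.
rewrite [X in _ + X](reindex_inj (h := fun p : V * V => (p.2, p.1))); last first.
  by move=> [a b] [a' b'] /= [-> ->].
rewrite /= (eq_bigl _ _ (fun p => pred_swap t p.1 p.2)) -big_split /=.
apply: big1 => [[a b]] /= /andP[/andP[at1]]; rewrite !inE => /andP[ba bt] lab.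
rewrite !mulrA -!exprD.
rewrite (vposD1 b at1) (vposD1 a bt) (leq_gtF (ltnW lab)) lab addn0 addn1.
rewrite setDDl setUC -setDDl addSn exprS mulN1r [(vpos b _ + _)%N]addnC.
by rewrite mulNr subrr.
Qed.

Definition hv (v : V) (c : {set V} -> k) (t : {set V}) : k :=
  if v \in t then 0 else (-1) ^+ vpos v (v |: t) * c (v |: t).

Lemma sqr_sign n : ((-1) ^+ n * (-1) ^+ n = 1 :> k).
Proof. by rewrite -exprD -signr_odd oddD addbb. Qed.

Lemma cone_in (v : V) (c : {set V} -> k) (s : {set V}) : v \in s -> coboundary (hv v c) s = c s.
Proof.
move=> vs; rewrite /coboundary (bigD1 v) //= big1 ?addr0; last first.
  move=> u /andP[us uv]; rewrite /hv !inE eq_sym uv vs /=; by rewrite mulr0.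
rewrite /hv !inE eqxx /= setD1K //.
have -> : vpos v s = vpos v (s :\ v) by rewrite (vposD1 v vs) ltnn addn0.
by rewrite mulrA sqr_sign mul1r.
Qed.

Lemma sign_cancel1 (a b : nat) (x : k) :
  (-1) ^+ (a + b) * x + (-1) ^+ (b + true + a) * x = 0.
Proof. by rewrite addn1 addSn exprS [(b + a)%N]addnC mulN1r mulNr subrr. Qed.

Lemma sign_cancel2 (a b : nat) (x : k) :
  (-1) ^+ (a + b) * x + (-1) ^+ (b + (a + true)) * x = 0.
Proof. by rewrite addn1 addnS exprS [(b + a)%N]addnC mulN1r mulNr subrr. Qed.

Lemma cone_out (v : V) (c : {set V} -> k) (s : {set V}) : v \notin s ->
  coboundary (hv v c) s + (-1) ^+ vpos v (v |: s) * coboundary c (v |: s) = c s.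
Proof.
move=> vs; rewrite /coboundary [X in _ + _ * X](bigD1 v) ?setU11 //=.
rewrite setU1K // mulrDr mulrA sqr_sign mul1r addrCA -[RHS]addr0; congr (_ + _).
rewrite big_distrr /= [X in _ + X](eq_bigl (fun u => u \in s)); last first.
  by move=> u /=; rewrite !inE; case: (eqVneq u v) => [->|]; rewrite ?(negbTE vs) ?andbT ?andbF.
rewrite -big_split /=.
apply: big1 => u us.
have uv : u != v by apply: contraNneq vs => <-.
have vsu : v \notin s :\ u by rewrite !inE negb_and vs orbT.
rewrite /hv (negbTE vsu).
have -> : (v |: s) :\ u = v |: (s :\ u).
  by apply/setP=> x; rewrite !inE; case: (eqVneq x u) => //= ->; rewrite (negbTE uv).
rewrite (vposU1 v vsu) (vposU1 v vs) (vposU1 u vs) ltnn !addn0 (vposD1 v us).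
rewrite !mulrA -!exprD.
have : enum_rank u != enum_rank v by apply: contra uv => /eqP/enum_rank_inj ->.
rewrite neq_ltn => /orP[h|h].
  rewrite h (leq_gtF (ltnW h)) !addn0; exact: sign_cancel1.
rewrite h (leq_gtF (ltnW h)) addn0; exact: sign_cancel2.
Qed.
End Gen.

Section Pos.
Variables (d : Order.disp_t) (P : finPOrderType d) (x0 : P) (Q : {set P}).
Hypothesis hmin : forall x : P, minimal_elt x <-> x = x0.

Lemma x0_min (y : P) : (x0 <= y)%O.
Proof.
suff H : forall n (y : P), #|[set z | (z < y)%O]| <= n -> (x0 <= y)%O by exact: H.
elim=> [|n IH] {}y hy.
  have -> : y = x0; last by [].
  apply/hmin => z zy.
  by move: hy; rewrite leqn0 => /eqP/cards0_eq/setP/(_ z); rewrite !inE zy.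
case: (boolP [exists z, (z < y)%O]) => [/existsP[z zy]|].
  apply: le_trans (IH z _) (ltW zy).
  rewrite -ltnS; apply: leq_trans hy; apply: proper_card; apply/properP; split.
    by apply/subsetP=> w; rewrite !inE => /lt_trans; apply.
  by exists z; rewrite !inE ?zy ?ltxx.
move=> /existsPn ny.
have -> : y = x0; last by [].
by apply/hmin => z; move/negP: (ny z).
Qed.

Notation V := (P + P)%type.
Notation F := (order_complex (uplus_carrier Q :\ inr x0) (@uplus_lt d P)).

Lemma F_sub (s t : {set V}) : F s -> t \subset s -> F t.
Proof.
move=> /andP[sW /forallP cs] ts; apply/andP; split; first exact: subset_trans sW.
apply/forallP=> u; apply/implyP=> ut; apply/forallP=> v; apply/implyP=> vt.
by move/implyP: (cs u) => /(_ (subsetP ts u ut)) /forallP/(_ v)/implyP/(_ (subsetP ts v vt)).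
Qed.

Definition stars (t : {set V}) := [set x : P | inr x \in t].

Definition vt (t : {set V}) : V :=
  inl (odflt x0 [pick m in stars t | [forall x in stars t, (x <= m)%O]]).

Lemma chain_max (A : {set P}) (a0 : P) : a0 \in A ->
  {in A &, forall x y, x != y -> (x < y)%O || (y < x)%O} ->
  exists2 m, m \in A & forall x, x \in A -> (x <= m)%O.
Proof.
move=> a0A ch.
case: (arg_maxnP (fun m => #|[set x in A | (x <= m)%O]|) a0A) => m mA mmax.
exists m => // x xA.
case: (boolP (x <= m)%O) => // nxm.
have xm : x != m by apply: contraNneq nxm => ->.
have := ch x m xA mA xm; rewrite (negbTE (contraNN (@ltW _ _ _ _) nxm)) /= => mx.
suff : (#|[set y in A | (y <= m)%O]| < #|[set y in A | (y <= x)%O]|)%N. move=> H1; have := mmax x xA => /=; by rewrite leqNgt H1.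
apply: proper_card; apply/properP; split.
  by apply/subsetP=> w; rewrite !inE => /andP[-> /le_trans]; apply; apply: ltW.
by exists x; rewrite !inE ?xA ?lexx // (negbTE nxm).
Qed.

Lemma F_vt (s : {set V}) : F s -> F (vt s |: s).
Proof.
move=> Fs; have /andP[sW /forallP cs] := Fs.
have cmp : forall a, a \in s -> a != vt s -> uplus_lt a (vt s) || uplus_lt (vt s) a.
  move=> a as1; rewrite /vt.
  case: pickP => [m /andP[ms /forallP mmax]|nomax] /=.
    case: a as1 => [y|x] as1 av /=.
      have my : (m <= y)%O.
        move: ms; rewrite inE => ms.
        have ym : inl y != inr m :> V by [].
        by move/implyP: (cs (inl y)) => /(_ as1)/forallP/(_ (inr m))/implyP/(_ ms)/implyP/(_ ym).
      rewrite orbC lt_neqAle my andbT; apply/orP; left.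
      by apply: contra av => /eqP ->.
    by rewrite orbF; have := mmax x; rewrite inE as1.
  case: (set_0Vmem (stars s)) => [s0|[a0 a0s]].
    case: a as1 => [y|x] as1 av /=.
      rewrite orbC lt_neqAle x0_min andbT; apply/orP; left.
      by apply: contra av => /eqP ->.
    by move/setP: s0 => /(_ x); rewrite !inE as1.
  have ch : {in stars s &, forall x y, x != y -> (x < y)%O || (y < x)%O}.
    move=> x y; rewrite !inE => xs ys xy.
    have xy' : inr x != inr y :> V by apply: contra xy => /eqP [->].
    by move/implyP: (cs (inr x)) => /(_ xs)/forallP/(_ (inr y))/implyP/(_ ys)/implyP/(_ xy').
  have [m ms mmax] := chain_max a0s ch.
  move: (nomax m); rewrite ms /= => /negP; case; apply/forallP => z.
  by apply/implyP => /mmax.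
apply/andP; split.
  rewrite subUset sW andbT sub1set /vt !inE /=; by [].
apply/forallP=> u; apply/implyP; rewrite in_setU1 => /predU1P ut.
apply/forallP=> w; apply/implyP; rewrite in_setU1 => /predU1P wt.
apply/implyP=> uw.
case: ut => [eu|ut]; case: wt => [ew|wt].
- by rewrite eu ew eqxx in uw.
- by rewrite eu orbC; apply: cmp => //; rewrite eu eq_sym in uw.
- by rewrite ew; apply: cmp => //; rewrite ew in uw.
- by move/implyP: (cs u) => /(_ ut)/forallP/(_ w)/implyP/(_ wt)/implyP/(_ uw).
Qed.

Variable k : fieldType.
Local Open Scope ring_scope.

Lemma stars_inl (w : P) (t : {set V}) : stars (inl w |: t) = stars t.
Proof. by apply/setP=> x; rewrite !inE. Qed.

Lemma stars_Dinl (y : P) (t : {set V}) : stars (t :\ inl y) = stars t.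
Proof. by apply/setP=> x; rewrite !inE. Qed.

Lemma stars_Dinr (x : P) (t : {set V}) : inr x \in t -> #|stars t| = (#|stars (t :\ inr x)|).+1.
Proof.
move=> xt.
have -> : stars (t :\ inr x) = stars t :\ x.
  apply/setP=> y; rewrite !inE; case: (eqVneq y x) => [->|yx] /=; first by rewrite eqxx.
  by case: eqP => // -[] e; rewrite e eqxx in yx.
by rewrite (cardsD1 x (stars t)) inE xt.
Qed.

Lemma stars_le (t : {set V}) : (#|stars t| <= #|t|)%N.
Proof.
rewrite -(card_imset _ (@inr_inj P P)); apply: subset_leq_card.
by apply/subsetP=> a /imsetP[x]; rewrite inE => xt ->.
Qed.

Lemma hv_low (w : P) (c : {set V} -> k) (t : {set V}) n :
  (forall s, (#|stars s| < n)%N -> c s = 0) -> (#|stars t| < n)%N -> hv (inl w) c t = 0.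
Proof. by move=> c0 tn; rewrite /hv; case: ifP => // _; rewrite c0 ?mulr0 // stars_inl. Qed.

Lemma int_aux (n : nat) (i : int) : (n.+1)%:Z = i + 2 -> n%:Z = i + 1.
Proof. lia. Qed.

Definition hc (c : {set V} -> k) (t : {set V}) := hv (vt t) c t.

Lemma key (i : int) (c : {set V} -> k) n : cochain_of F i c ->
  (forall t, F t -> #|t|%:Z = i + 2 -> coboundary c t = 0) ->
  (forall s, (#|stars s| < n)%N -> c s = 0) ->
  forall s, F s -> #|s|%:Z = i + 1 -> (#|stars s| <= n)%N -> coboundary (hc c) s = c s.
Proof.
move=> cc cyc c0 s Fs ss sn.
have -> : coboundary (hc c) s = coboundary (hv (vt s) c) s.
  apply: eq_bigr => u us; congr (_ * _).
  case: u us => [y|x] us; first by rewrite /hc /vt stars_Dinl.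
  have lt : (#|stars (s :\ inr x)| < n)%N by move: sn; rewrite (stars_Dinr us).
  by rewrite /hc /vt !(hv_low _ c0 lt).
case: (boolP (vt s \in s)) => vs; first exact: cone_in.
rewrite -(cone_out c vs) cyc ?mulr0 ?addr0 //; first exact: F_vt.
rewrite cardsU1 vs add1n; move: ss; lia.
Qed.

Lemma hc_cochain (i : int) (c : {set V} -> k) : cochain_of F i c -> cochain_of F (i - 1) (hc c).
Proof.
move=> cc s; rewrite /hc /hv; case: ifP => [_|vs]; first by rewrite eqxx.
rewrite mulf_eq0 negb_or => /andP[_ /cc [Fs' card]]; split.
  exact: F_sub Fs' (subsetUr _ _).
by move: card; rewrite cardsU1 vs add1n; lia.
Qed.

Lemma main (i : int) m (c : {set V} -> k) : cochain_of F i c ->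
  (forall t, F t -> #|t|%:Z = i + 2 -> coboundary c t = 0) ->
  (forall s, (#|stars s| < #|{: V}|.+1 - m)%N -> c s = 0) ->
  exists2 b, cochain_of F (i - 1) b &
      forall s, F s -> #|s|%:Z = i + 1 -> coboundary b s = c s.
Proof.
elim: m c => [|m IH] c cc cyc c0.
  exists (fun _ => 0); first by move=> s; rewrite eqxx.
  move=> s _ _; rewrite coboundary0 c0 // subn0 ltnS.
  exact: leq_trans (stars_le s) (max_card _).
pose c' := fun s => if F s && (#|s|%:Z == i + 1) then c s - coboundary (hc c) s else 0.
have cc' : cochain_of F i c'.
  by move=> s; rewrite /c'; case: ifP => [/andP[Fs /eqP ->]|_]; rewrite ?eqxx.
have cyc' : forall t, F t -> #|t|%:Z = i + 2 -> coboundary c' t = 0.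
  move=> t Ft ct.
  transitivity (coboundary c t - coboundary (coboundary (hc c)) t); last first.
    by rewrite coboundary2 cyc // subr0.
  rewrite /coboundary -sumrB; apply: eq_bigr => u ut.
  rewrite /c' (F_sub Ft (subD1set t u)) /= ifT ?mulrBr //.
  by apply/eqP; apply: int_aux; move: ct; rewrite (cardsD1 u t) ut add1n.
have c0' : forall s, (#|stars s| < #|{: V}|.+1 - m)%N -> c' s = 0.
  move=> s sl; rewrite /c'; case: ifP => // /andP[Fs /eqP cs].
  by rewrite (key cc cyc c0) ?subrr //; lia.
have [b' cb' eb'] := IH c' cc' cyc' c0'.
exists (fun s => hc c s + b' s).
  move=> s; case: (eqVneq (hc c s) 0) => [->|]; first by rewrite add0r => /cb'.
  by move=> /(hc_cochain cc).
move=> s Fs cs; rewrite coboundaryD eb' // /c' Fs cs eqxx /= addrC subrK //.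
Qed.

Lemma final (i : int) : reduced_cohomology_vanishes k F i.
Proof.
move=> c cc cyc; apply: (main (m := #|{: V}|.+1) cc cyc) => s.
by rewrite subnn.
Qed.
End Pos.

Theorem lemma6p6 (d : Order.disp_t) (P : finPOrderType d) (x0 : P)
    (Q : {set P}) (k : fieldType) :
  (forall x : P, minimal_elt x <-> x = x0) ->
  poset_ideal Q ->
  Q != set0 ->
  forall i : int,
    reduced_cohomology_vanishes k
      (order_complex (uplus_carrier Q :\ inr x0) (@uplus_lt d P)) i.
Proof.
move=> hmin _ _ i; exact: (@final d P x0 Q hmin k i).
Qed.
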